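(* Let $\tau$ be an untwisted skew product with group factor $\mathbb Z^d$ and base shift $(\Sigma,\sigma)$ a transitive countable state Markov shift. The following are equivalent: (a) $\tau$ has the ftp; (b) $\langle D(\tau)\rangle=\mathbb Z^d$; (c) for every finite-index subgroup $\Gamma\subset\mathbb Z^d$, $\langle D(\tau_\Gamma)\rangle_+=\langle D(\tau_\Gamma)\rangle=\mathbb Z^d/\Gamma$.
   Context: Countable state Markov shift $(\Sigma,\sigma)$: countable state set $S$, $\{0,1\}$-matrix $C$ with finite row/column sums, $\Sigma=\{s\in S^{\mathbb Z}:C_{s_is_{i+1}}=1\ \forall i\}$, product of discrete topologies, $\sigma$ left shift; transitive means for all nonempty open $U,V$ some $n$ has $\sigma^n(U)\cap V\neq\emptyset$. Untwisted skew product with group $G$: $\tau(s,g)=(\sigma(s),g+h(s))$ on $\Sigma\times G$, $h:\Sigma\to G$ depending only on $(s_0,s_1)$; for a subgroup $\Gamma$, $\tau_\Gamma(s,g+\Gamma)=(\sigma s,g+h(s)+\Gamma)$ (an untwisted skew product with group $G/\Gamma$). ftp: $\tau_\Gamma$ is transitive for every finite-index subgroup $\Gamma\subset\mathbb Z^d$. With $h(s,n)=\sum_{i=0}^{n-1}h(\sigma^is)$, the displacement set is $D(\tau)=\{h(p,n):n>0,\ \sigma^n(p)=p\}$. For $X$ in an abelian group, $\langle X\rangle$ is the subgroup generated by $X$ and $\langle X\rangle_+$ is the additive semigroup generated by $X$ (all finite sums, with at least one term, of elements of $X$). *)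

(* Defs.v *)
From HB Require Import structures.
From mathcomp Require Import all_boot all_order all_algebra.
Set Implicit Arguments. Unset Strict Implicit. Unset Printing Implicit Defensive.
Import GRing.Theory Num.Theory.
Local Open Scope ring_scope.

Section MarkovShift.
Variables (S : countType) (C : S -> S -> bool).

Definition Sigma := {x : int -> S | forall i : int, C (x i) (x (i + 1))}.

Definition shift (x : Sigma) : Sigma :=
  exist (fun y : int -> S => forall i : int, C (y i) (y (i + 1)))
    (fun i => sval x (i + 1)) (fun i => svalP x (i + 1)).

(* finite row / column sums of the 0-1 matrix C *)
Definition finite_rows := forall s : S, exists l : seq S, forall t, C s t -> t \in l.
Definition finite_cols := forall t : S, exists l : seq S, forall s, C s t -> s \in l.

Definition agree (N : nat) (x y : Sigma) :=
  forall i : int, (`|i| <= N)%N -> sval y i = sval x i.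

(* open sets of the product of discrete topologies *)
Definition open_Sigma (U : Sigma -> Prop) :=
  forall x, U x -> exists N : nat, forall y, agree N x y -> U y.

Definition transitive_shift :=
  forall U V : Sigma -> Prop, open_Sigma U -> open_Sigma V ->
    (exists x, U x) -> (exists x, V x) ->
    exists n : nat, exists x, U x /\ V (iter n shift x).

Variables (G : zmodType) (h : S -> S -> G).

Definition cocycle (x : Sigma) : G := h (sval x 0) (sval x 1).

Definition birkhoff (x : Sigma) (n : nat) : G :=
  \sum_(i < n) cocycle (iter i shift x).

Definition skew (z : Sigma * G) : Sigma * G := (shift z.1, z.2 + cocycle z.1).

Definition is_subgroup (Gam : G -> Prop) :=
  Gam 0 /\ forall x y, Gam x -> Gam y -> Gam (x - y).
Definition finite_index (Gam : G -> Prop) :=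
  exists r : seq G, forall g, exists2 a, a \in r & Gam (g - a).

(* A subset of Sigma x (G/Gam) is represented by its preimage in Sigma x G,
   i.e. a Gam-saturated subset U of Sigma x G. It is open (G/Gam discrete)
   iff each slice is open in Sigma. *)
Definition open_quot (Gam : G -> Prop) (U : Sigma -> G -> Prop) :=
  (forall x g c, Gam c -> U x g -> U x (g + c)) /\
  (forall x g, U x g -> exists N : nat, forall y, agree N x y -> U y g).

(* transitivity of tau_Gam on Sigma x G/Gam; tau_Gam is induced by tau. *)
Definition transitive_quot (Gam : G -> Prop) :=
  forall U V : Sigma -> G -> Prop, open_quot Gam U -> open_quot Gam V ->
    (exists x g, U x g) -> (exists x g, V x g) ->
    exists n : nat, exists x g,
      U x g /\ V (iter n skew (x, g)).1 (iter n skew (x, g)).2.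

Definition ftp := forall Gam : G -> Prop,
  is_subgroup Gam -> finite_index Gam -> transitive_quot Gam.

Definition disp (g : G) :=
  exists (p : Sigma) (n : nat), (0 < n)%N /\ iter n shift p = p /\ g = birkhoff p n.

(* preimage in G of D(tau_Gam) subset G/Gam *)
Definition disp_quot (Gam : G -> Prop) (g : G) :=
  exists (p : Sigma) (n : nat), (0 < n)%N /\ iter n shift p = p /\ Gam (g - birkhoff p n).

End MarkovShift.

Section Generated.
Variable (G : zmodType).

Inductive in_gen (X : G -> Prop) : G -> Prop :=
| gen0 : in_gen X 0
| genX x : X x -> in_gen X x
| genB a b : in_gen X a -> in_gen X b -> in_gen X (a - b).

Inductive in_sg (X : G -> Prop) : G -> Prop :=
| sgX x : X x -> in_sg X x
| sgD a b : in_sg X a -> in_sg X b -> in_sg X (a + b).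

(* membership of the coset g + Gam in the subgroup / semigroup of G/Gam
   generated by the image of X *)
Definition gen_quot (Gam : G -> Prop) (X : G -> Prop) (g : G) :=
  exists a, in_gen X a /\ Gam (g - a).
Definition sg_quot (Gam : G -> Prop) (X : G -> Prop) (g : G) :=
  exists a, in_sg X a /\ Gam (g - a).
End Generated.

(* Main.v *)
Require Import Defs.
From HB Require Import structures.
From mathcomp Require Import all_boot all_order all_algebra.
From Stdlib Require Import ClassicalEpsilon ProofIrrelevance FunctionalExtensionality Classical.
Import GRing.Theory Num.Theory Order.TTheory.
Local Open Scope ring_scope.
Set Implicit Arguments. Unset Strict Implicit. Unset Printing Implicit Defensive.


Section Grp.
Variable G : zmodType.
Variable P : G -> Prop.
Hypothesis HP : is_subgroup P.

Lemma subg0 : P 0. Proof. by case: HP. Qed.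
Lemma subgB x y : P x -> P y -> P (x - y). Proof. by case: HP => _ H; apply: H. Qed.
Lemma subgN x : P x -> P (- x).
Proof. by move=> Hx; rewrite -sub0r; apply: subgB => //; apply: subg0. Qed.
Lemma subgD x y : P x -> P y -> P (x + y).
Proof. by move=> Hx Hy; rewrite -[y]opprK; apply: subgB => //; apply: subgN. Qed.
Lemma subgMn x n : P x -> P (x *+ n).
Proof. move=> Hx; elim: n => [|n IH]; first by rewrite mulr0n; apply: subg0. by rewrite mulrS; apply: subgD. Qed.
Lemma subgMz x (z : int) : P x -> P (x *~ z).
Proof. move=> Hx; case: z => n; first by rewrite /=; apply: subgMn. by rewrite NegzE mulrNz; apply: subgN; apply: subgMn. Qed.
Lemma subgEq x y : x = y -> P x -> P y. Proof. by move=> ->. Qed.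
End Grp.

Lemma in_gen_sub (G : zmodType) (X : G -> Prop) : is_subgroup (in_gen X).
Proof. split; [exact: gen0 | move=> x y; exact: genB]. Qed.


Section Dyn.
Variables (S : countType) (C : S -> S -> bool) (G : zmodType) (h : S -> S -> G).

Definition valid (y : int -> S) := forall i : int, C (y i) (y (i + 1)).
Definition wt (y : int -> S) (i : int) (n : nat) : G :=
  \sum_(k < n) h (y (i + k%:Z)) (y (i + k%:Z + 1)).

Lemma iter_shift (x : Sigma C) n i : sval (iter n (@shift S C) x) i = sval x (i + n%:Z).
Proof.
elim: n i => [|n IH] i; first by rewrite addr0.
by rewrite iterS /= IH -addn1 PoszD addrA addrAC.
Qed.

Lemma birk_wt (x : Sigma C) n : birkhoff h x n = wt (sval x) 0 n.
Proof.
apply: eq_bigr => k _; rewrite /cocycle !iter_shift add0r; congr h; by rewrite addrC.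
Qed.

Lemma iter_skew (x : Sigma C) (g : G) n :
  iter n (Defs.skew h) (pair x g) = pair (iter n (@shift S C) x) (g + birkhoff h x n).
Proof.
elim: n => [|n IH]; first by rewrite /birkhoff big_ord0 addr0.
by rewrite iterS IH /Defs.skew /= /birkhoff big_ord_recr /= addrA.
Qed.

Lemma wt_split y i m n : wt y i (m + n) = wt y i m + wt y (i + m%:Z) n.
Proof.
rewrite /wt big_split_ord /=; congr (_ + _); apply: eq_bigr => k _.
by rewrite /= PoszD addrA.
Qed.

Lemma wt_ext y z i j n :
  (forall k : nat, (k <= n)%N -> y (i + k%:Z) = z (j + k%:Z)) -> wt y i n = wt z j n.
Proof.
move=> E; apply: eq_bigr => k _.
have h1 := E k (ltnW (ltn_ord k)).
have h2 := E k.+1 (ltn_ord k).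
rewrite intS (addrC 1) in h2.
by rewrite h1 -!addrA h2.
Qed.

Lemma wt0 y i : wt y i 0 = 0. Proof. by rewrite /wt big_ord0. Qed.

Definition mkS (y : int -> S) (Hy : valid y) : Sigma C := exist _ y Hy.

Lemma Sigma_eq (x y : Sigma C) : sval x = sval y -> x = y.
Proof.
case: x => x Hx; case: y => y Hy /= E; subst y; f_equal; apply: proof_irrelevance.
Qed.

Lemma valid_shift y j : valid y -> valid (fun k => y (k + j)).
Proof. by move=> Hy k; rewrite -addrA (addrC 1) addrA. Qed.

Definition glue (y z : int -> S) (i j : int) : int -> S :=
  fun k => if k <= i then y k else z (k - i + j).

Lemma glue_l y z i j k : k <= i -> glue y z i j k = y k.
Proof. by rewrite /glue => ->. Qed.

Lemma glue_r y z i j k : y i = z j -> i <= k -> glue y z i j k = z (k - i + j).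
Proof.
rewrite /glue => E; rewrite le_eqVlt => /orP [/eqP <-|lt]; first by rewrite lexx subrr add0r.
by rewrite leNgt lt.
Qed.

Lemma valid_glue y z i j : valid y -> valid z -> y i = z j -> valid (glue y z i j).
Proof.
move=> Hy Hz E k; case: (lerP (k + 1) i) => H.
  by rewrite !glue_l // (le_trans _ H) // lerDl.
rewrite (glue_r E (ltW H)).
case: (lerP k i) => H'.
  have ki : k = i by apply/eqP; rewrite eq_le H' -ltzD1.
  by rewrite glue_l // ki E (addrC i 1) addrK addrC; exact: Hz.
rewrite (glue_r E (ltW H')).
have -> : k + 1 - i + j = k - i + j + 1 by rewrite -!addrA; congr (_ + _); rewrite addrCA (addrC 1).
exact: Hz.
Qed.

End Dyn.


Section Walks.
Variables (S : countType) (C : S -> S -> bool) (G : zmodType) (h : S -> S -> G).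

Definition Walk a b w := exists (y : int -> S) (n : nat),
  valid C y /\ y 0 = a /\ y n%:Z = b /\ wt h y 0 n = w.
Definition ess a := exists y, valid C y /\ y 0 = a.

Lemma walk_glue a b c w1 w2 : Walk a b w1 -> Walk b c w2 -> Walk a c (w1 + w2).
Proof.
move=> [y [n1 [Hy [y0 [yn <-]]]]] [z [n2 [Hz [z0 [zn <-]]]]].
have E : y n1%:Z = z 0 by rewrite yn z0.
exists (glue y z n1%:Z 0), (n1 + n2)%N; split; first exact: valid_glue.
split; first by rewrite glue_l.
split.
  rewrite (glue_r E); last by rewrite PoszD lerDl.
  by rewrite PoszD addr0 (addrC n1%:Z) addrK.
rewrite wt_split; congr (_ + _).
  apply: wt_ext => k kn; rewrite glue_l // add0r lez_nat.
apply: wt_ext => k kn; rewrite add0r (glue_r E) ?lerDl //.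
by rewrite addr0 (addrC n1%:Z) addrK.
Qed.

Lemma walk_ess a b w : Walk a b w -> ess a /\ ess b.
Proof.
move=> [y [n [Hy [y0 [yn _]]]]]; split; first by exists y.
exists (fun k => y (k + n%:Z)); split; [exact: valid_shift | by rewrite add0r].
Qed.

Lemma ess_walk0 a : ess a -> Walk a a 0.
Proof. move=> [y [Hy y0]]; exists y, 0%N; do 3!split => //; exact: wt0. Qed.

Lemma ess_at y i : valid C y -> ess (y i).
Proof. move=> Hy; exists (fun k => y (k + i)); split; [exact: valid_shift | by rewrite add0r]. Qed.

Lemma open_cyl a : open_Sigma (fun z : Sigma C => sval z 0 = a).
Proof. move=> x Hx; exists 0%N => y Ha; rewrite Ha //. Qed.

Lemma reach a b : transitive_shift C -> ess a -> ess b -> exists w, Walk a b w.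
Proof.
move=> Htr [ya [Hya ya0]] [yb [Hyb yb0]].
have [n [x [Ux Vx]]] := Htr _ _ (@open_cyl a) (@open_cyl b)
   (ex_intro _ (mkS Hya) ya0) (ex_intro _ (mkS Hyb) yb0).
exists (wt h (sval x) 0 n), (sval x), n; split; first exact: (svalP x).
by rewrite -Ux; split => //; split => //; rewrite -Vx iter_shift add0r.
Qed.

Lemma closed_disp y (n : nat) : valid C y -> y 0 = y n%:Z -> (0 < n)%N ->
  disp C h (wt h y 0 n).
Proof.
move=> Hy yn npos.
have n0 : (n%:Z != 0) by rewrite eqz_nat -lt0n.
have ng : (0 < n%:Z) by rewrite ltz_nat.
pose p k := y (k %% n%:Z)%Z.
have Hp : valid C p.
  move=> k; rewrite /p -modzDml.
  have r0 := modz_ge0 k n0; have rn := ltz_pmod k ng.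
  set r := (k %% n%:Z)%Z in r0 rn *.
  case: (ltrP (r + 1) n%:Z) => H.
    rewrite (modz_small (m := r + 1)); first exact: Hy.
    by rewrite H andbT (le_trans r0) // lerDl.
  have E : r + 1 = n%:Z by apply/eqP; rewrite eq_le H andbT lezD1.
  by rewrite E modzz yn -E; exact: Hy.
exists (mkS Hp), n; split => //; split.
  apply: Sigma_eq; apply: functional_extensionality => k.
  by rewrite iter_shift /= /p modzDr.
rewrite birk_wt /=; apply: wt_ext => k kn; rewrite /p !add0r.
have [kn'|] := ltnP k n; first by rewrite modz_small // ltz_nat kn' andbT.
move=> nk; have -> : k = n by apply/eqP; rewrite eqn_leq kn nk.
by rewrite modzz yn.
Qed.

Lemma disp_walk g : disp C h g -> exists a, ess a /\ Walk a a g.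
Proof.
move=> [p [n [np [pp ->]]]]; exists (sval p 0); split; first by apply: ess_at; exact: svalP.
exists (sval p), n; split; first exact: svalP.
do 2!split => //; last by rewrite birk_wt.
by rewrite -{2}pp iter_shift add0r.
Qed.

Lemma exists_periodic : inhabited (Sigma C) -> transitive_shift C ->
  exists g, disp C h g.
Proof.
move=> [x] Htr.
have Hx := svalP x.
have [w [y [n [Hy [y0 [yn _]]]]]] := reach Htr (ess_at 1 Hx) (ess_at 0 Hx).
pose f := glue (sval x) y 1 0.
have E : sval x 1 = y 0 by rewrite y0.
have Hf : valid C f by apply: valid_glue.
exists (wt h f 0 n.+1); apply: closed_disp => //.
rewrite /f glue_l // (glue_r E); last by rewrite intS lerDl.
by rewrite intS addr0 (addrC 1) addrK yn.
Qed.

End Walks.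


Lemma pigeon (G : zmodType) (P : G -> Prop) : is_subgroup P -> finite_index P ->
  forall c, exists k, (0 < k)%N /\ P (c *+ k).
Proof.
move=> HP [r Hr] c; apply: NNPP => Hno.
have Hr' g : exists a, a \in r /\ P (g - a) by case: (Hr g) => a ar Pa; exists a.
have [a Ha] : exists a : nat -> G, forall j, a j \in r /\ P (c *+ j - a j).
  exists (fun j => proj1_sig (constructive_indefinite_description _ (Hr' (c *+ j)))).
  move=> j; exact: (proj2_sig (constructive_indefinite_description _ (Hr' (c *+ j)))).
have key i j : (i < j)%N -> a i <> a j.
  move=> ij E; apply: Hno; exists (j - i)%N; split; first by rewrite subn_gt0.
  rewrite mulrnBr; last exact: ltnW.
  have := subgB HP (proj2 (Ha j)) (proj2 (Ha i)); rewrite E.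
  by rewrite opprB addrA subrK.
have inj : injective a.
  move=> i j E; case: (ltngtP i j) => // ij; first by case: (key _ _ ij E).
  by case: (key _ _ ij (esym E)).
have U : uniq (map a (iota 0 (size r).+1)) by rewrite map_inj_uniq // iota_uniq.
have Sub : {subset map a (iota 0 (size r).+1) <= r}.
  by move=> z /mapP [j _ ->]; exact: (proj1 (Ha j)).
by have := uniq_leq_size U Sub; rewrite size_map size_iota ltnn.
Qed.

Section Lq.
Variables (S : countType) (C : S -> S -> bool) (G : zmodType) (h : S -> S -> G).
Variable (Gam : G -> Prop).
Hypothesis (HP : is_subgroup Gam) (HF : finite_index Gam).
Hypothesis (Htr : transitive_shift C).
Variable (a : S).
Hypothesis (Ha : ess C a).

Definition Lq c := exists w, Walk C h a a w /\ Gam (c - w).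

Lemma Lq0 : Lq 0.
Proof. exists 0; split; [exact: ess_walk0 | rewrite subr0; exact: (subg0 HP)]. Qed.

Lemma LqD x y : Lq x -> Lq y -> Lq (x + y).
Proof.
move=> [w1 [W1 G1]] [w2 [W2 G2]]; exists (w1 + w2); split; first exact: walk_glue W1 W2.
by rewrite opprD addrACA; exact: (subgD HP G1 G2).
Qed.

Lemma LqMn x k : Lq x -> Lq (x *+ k).
Proof. move=> Hx; elim: k => [|k IH]; first by rewrite mulr0n; exact: Lq0. by rewrite mulrS; apply: LqD. Qed.

Lemma LqN x : Lq x -> Lq (- x).
Proof.
move=> Hx; have [k [k0 Gk]] := pigeon HP HF x.
have [w [W Gw]] := LqMn k.-1 Hx.
exists w; split => //.
have := subgB HP Gw Gk; rewrite -(prednK k0) mulrSr.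
by rewrite opprD addrACA subrr add0r addrC.
Qed.

Lemma Lq_disp g : disp C h g -> Lq g.
Proof.
move=> /disp_walk [v [Hv Wv]].
have [w1 W1] := reach h Htr Ha Hv.
have [w2 W2] := reach h Htr Hv Ha.
have L1 : Lq (w1 + g + w2).
  exists (w1 + g + w2); split; first by apply: walk_glue W2; apply: walk_glue W1 Wv.
  by rewrite subrr; exact: (subg0 HP).
have L2 : Lq (w1 + w2).
  exists (w1 + w2); split; first by apply: walk_glue W1 W2.
  by rewrite subrr; exact: (subg0 HP).
have := LqD L1 (LqN L2).
by rewrite (addrC w1 g) -addrA -addrA (addrA w1) subrr addr0.
Qed.

Lemma Lq_gen g : in_gen (disp C h) g -> Lq g.
Proof.
elim => [|x Dx|x y _ Hx _ Hy]; first exact: Lq0; first exact: Lq_disp.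
by apply: LqD => //; apply: LqN.
Qed.

End Lq.


Lemma absz_le (i : int) (N : nat) : (`|i| <= N)%N -> - N%:Z <= i <= N%:Z.
Proof. by rewrite -lez_nat abszE ler_norml. Qed.

Lemma zid1 (N k : int) : N + k - N + 0 = k.
Proof. by rewrite addr0 (addrC N) addrK. Qed.

Lemma ac5 (V : zmodType) (w1 g A w0 B : V) : w1 + (g + A + w0 + B) = g + (A + (w1 + w0) + B).
Proof. by rewrite !addrA (addrC w1 g) (addrAC g w1 A). Qed.

Section Main.
Variables (S : countType) (C : S -> S -> bool) (G : zmodType) (h : S -> S -> G).
Hypothesis (Htr : transitive_shift C).
Hypothesis (HB : forall g, in_gen (disp C h) g).

Lemma ftp_of_gen : ftp C h.
Proof.
move=> Gam HP HF U V [HUs HUo] [HVs HVo] [x [g Ux]] [x' [g' Vx']].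
have [N HN] := HUo _ _ Ux.
have [M HM] := HVo _ _ Vx'.
have Hx := svalP x; have Hx' := svalP x'.
set X := sval x in Hx; set X' := sval x' in Hx'.
have Ea := ess_at N%:Z Hx; have Eb := ess_at (- M%:Z) Hx'.
have [w0 W0] := reach h Htr Ea Eb.
pose A := wt h X 0 N; pose B := wt h X' (- M%:Z) M.
pose delta := g' - (g + A + w0 + B).
have [w1 [W1 G1]] := Lq_gen HP HF Htr Ea (HB delta).
have [P [L [HPv [P0 [PL Pw]]]]] := walk_glue W1 W0.
have EQ : P L%:Z = X' (- M%:Z) by [].
pose Q := glue P X' L%:Z (- M%:Z).
have HQ : valid C Q by apply: valid_glue.
have EQ0 : X N%:Z = Q 0 by rewrite /Q glue_l.
pose f := glue X Q N%:Z 0.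
have Hf : valid C f by apply: valid_glue.
exists (N + L + M)%N, (mkS Hf), g; split.
  apply: HN => i /absz_le /andP [_ iN]; rewrite /= /f glue_l //.
rewrite iter_skew /=.
have Hw : birkhoff h (mkS Hf) (N + L + M) = A + (w1 + w0) + B.
  rewrite birk_wt /= !wt_split; congr (_ + _ + _).
  - apply: wt_ext => k kn; rewrite /f glue_l // add0r lez_nat.
  - rewrite -Pw; apply: wt_ext => k kn; rewrite /f (glue_r EQ0); last by rewrite add0r lerDl.
    rewrite add0r zid1 /Q glue_l //.
  - apply: wt_ext => k kn; rewrite /f (glue_r EQ0); last by rewrite add0r PoszD -addrA lerDl.
    rewrite add0r PoszD -(addrA N%:Z) zid1 /Q (glue_r EQ); last by rewrite lerDl.
    by rewrite (addrC L%:Z) addrK addrC.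
have Vg' : V (iter (N + L + M) (@shift S C) (mkS Hf)) g'.
  apply: HM => i /absz_le /andP [Mi iM]; rewrite iter_shift /= /f.
  have i0 : 0 <= i + M%:Z by rewrite -(addNr M%:Z) lerD2r.
  have -> : i + (N + L + M)%N%:Z = N%:Z + (L%:Z + (i + M%:Z)).
    by rewrite !PoszD addrC -!addrA (addrC M%:Z).
  rewrite (glue_r EQ0); last by rewrite lerDl addr_ge0.
  rewrite zid1 /Q (glue_r EQ); last by rewrite lerDl.
  by rewrite (addrC L%:Z) addrK addrK.
have Gc : Gam (g + birkhoff h (mkS Hf) (N + L + M) - g').
  have := subgN HP G1; rewrite Hw opprB /delta.
  by rewrite opprB addrA ac5.
by have := HVs _ _ _ Gc Vg'; rewrite addrC subrK.
Qed.
End Main.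


Section Eqm.
Variables (G : zmodType) (Gam : G -> Prop).
Hypothesis HP : is_subgroup Gam.
Definition eqm x y := Gam (x - y).
Lemma eqm_refl x : eqm x x. Proof. by rewrite /eqm subrr; exact: (subg0 HP). Qed.
Lemma eqm_add a b c d : eqm a b -> eqm c d -> eqm (a + c) (b + d).
Proof. by rewrite /eqm => H1 H2; rewrite opprD addrACA; exact: (subgD HP). Qed.
Lemma eqm_opp a b : eqm a b -> eqm (- a) (- b).
Proof. by rewrite /eqm => H; rewrite opprK addrC -opprB; exact: (subgN HP). Qed.
Lemma eqm_sym a b : eqm a b -> eqm b a.
Proof. by rewrite /eqm => H; rewrite -opprB; exact: (subgN HP). Qed.
Lemma eqm_trans a b c : eqm a b -> eqm b c -> eqm a c.
Proof. by rewrite /eqm => H1 H2; have := subgD HP H1 H2; rewrite subrKA. Qed.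
Lemma eqm_sub a b c d : eqm a b -> eqm c d -> eqm (a - c) (b - d).
Proof. by move=> H1 H2; apply: eqm_add => //; apply: eqm_opp. Qed.
End Eqm.

Section SgGen.
Variables (G : zmodType) (Gam : G -> Prop).
Hypothesis (HP : is_subgroup Gam) (HF : finite_index Gam).
Variable X : G -> Prop.

Lemma in_sgMn x k : in_sg X x -> in_sg X (x *+ k.+1).
Proof. move=> Hx; elim: k => [|k IH]; first by rewrite mulr1n. by rewrite mulrS; apply: sgD. Qed.

Lemma sg_gen s : in_sg X s -> in_gen X s.
Proof.
elim => [x Hx|a b _ Ha _ Hb]; first exact: genX.
have -> : a + b = a - (0 - b) by rewrite sub0r opprK.
by apply: genB => //; apply: genB => //; exact: gen0.
Qed.

Lemma sg_neg s : in_sg X s -> exists t, in_sg X t /\ eqm Gam (- s) t.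
Proof.
elim => [x Hx|a b _ [t1 [T1 E1]] _ [t2 [T2 E2]]].
  have [k [k0 Gk]] := pigeon HP HF x.
  exists (x *+ (k.-1 + k)); split.
    by rewrite -{2}(prednK k0) addnS; apply: in_sgMn; apply: sgX.
  rewrite /eqm mulrnDr -opprD addrA -mulrS prednK //.
  by apply: (subgN HP); apply: (subgD HP).
exists (t1 + t2); split; first exact: sgD.
by rewrite opprD; apply: eqm_add.
Qed.

Lemma gen_sg a : (exists x0, X x0) -> in_gen X a -> exists s, in_sg X s /\ eqm Gam a s.
Proof.
move=> [x0 Hx0]; elim => [|x Hx|a1 b1 _ [s1 [T1 E1]] _ [s2 [T2 E2]]].
- have [k [k0 Gk]] := pigeon HP HF x0.
  exists (x0 *+ k); split; first by rewrite -(prednK k0); apply: in_sgMn; apply: sgX.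
  by rewrite /eqm sub0r; apply: (subgN HP).
- exists x; split; [exact: sgX | exact: eqm_refl].
have [t [T Et]] := sg_neg T2.
exists (s1 + t); split; first exact: sgD.
by apply: eqm_add => //; exact: (eqm_trans HP (eqm_opp HP E2) Et).
Qed.
End SgGen.

Section Conv.
Variables (S : countType) (C : S -> S -> bool) (G : zmodType) (h : S -> S -> G).
Variable (Gam : G -> Prop).
Hypothesis (HP : is_subgroup Gam).

Lemma quot_conv a : in_gen (disp_quot C h Gam) a -> exists e, in_gen (disp C h) e /\ Gam (a - e).
Proof.
elim => [|x [p [n [np [pp Gx]]]]|a1 b1 _ [e1 [E1 G1]] _ [e2 [E2 G2]]].
- by exists 0; split; [exact: gen0 | rewrite subr0; exact: (subg0 HP)].
- exists (birkhoff h p n); split => //; apply: genX; exists p, n; do 2!split => //.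
exists (e1 - e2); split; first exact: genB.
exact: (eqm_sub HP G1 G2).
Qed.

Lemma gen_to_quot a : in_gen (disp C h) a -> in_gen (disp_quot C h Gam) a.
Proof.
elim => [|x [p [n [np [pp ->]]]]|a1 b1 _ H1 _ H2]; first exact: gen0.
- apply: genX; exists p, n; do 2!split => //; rewrite subrr; exact: (subg0 HP).
exact: genB.
Qed.

Lemma cosets_of_trans (Hne : inhabited (Sigma C)) : transitive_quot C h Gam ->
  forall g0, exists e, in_gen (disp C h) e /\ Gam (g0 - e).
Proof.
move=> Htq g0; case: Hne => x0.
pose a := sval x0 0.
pose U := fun (y : Sigma C) (g : G) => sval y 0 = a /\ Gam g.
pose V := fun (y : Sigma C) (g : G) => sval y 0 = a /\ Gam (g - g0).
have ag y y' : agree 0 y y' -> sval y' 0 = sval y 0 by move=> Hy; apply: Hy.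
have OU : open_quot Gam U.
  split; first by move=> y g c Gc [H1 H2]; split => //; apply: (subgD HP).
  by move=> y g [H1 H2]; exists 0%N => y' /ag E; split => //; rewrite E.
have OV : open_quot Gam V.
  split; first by move=> y g c Gc [H1 H2]; split => //; rewrite addrAC; apply: (subgD HP).
  by move=> y g [H1 H2]; exists 0%N => y' /ag E; split => //; rewrite E.
have [n [x [g [[Ux Gg] Vx]]]] := Htq U V OU OV (ex_intro _ x0 (ex_intro _ 0 (conj erefl (subg0 HP))))
  (ex_intro _ x0 (ex_intro _ g0 (conj erefl (eqm_refl HP g0)))).
rewrite iter_skew /= /V iter_shift add0r in Vx; case: Vx => xn Gn.
exists (birkhoff h x n); split.
  case: n xn Gn => [|n] xn Gn; first by rewrite /birkhoff big_ord0; exact: gen0.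
  apply: genX; rewrite birk_wt; apply: closed_disp => //; first exact: svalP.
  by rewrite xn Ux.
have := subgB HP Gn Gg; rewrite addrAC (addrC g) addrK => H.
by have := subgN HP H; rewrite opprB.
Qed.
End Conv.


Lemma rv_mulz d (v : 'rV[int]_d) j (z : int) : (v *~ z) 0 j = v 0 j * z.
Proof.
case: z => n; first by rewrite /= mulmxnE -mulrzz.
by rewrite NegzE !mulrNz mxE mulmxnE -mulrzz mulrNz.
Qed.

Definition Gm d (m : nat) : 'rV[int]_d -> Prop := fun u => forall j, (m%:Z %| u ord0 j)%Z.

Lemma Gm_sub d m : is_subgroup (@Gm d m).
Proof.
split; first by move=> j; rewrite mxE dvdz0.
by move=> x y Hx Hy j; rewrite !mxE rpredB.
Qed.

Lemma Gm_fin d m : (0 < m)%N -> finite_index (@Gm d m).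
Proof.
case: m => // k _.
pose r := [seq map_mx (fun i : 'I_k.+1 => (i : nat)%:Z) A | A <- enum {: 'M['I_k.+1]_(1, d)}].
exists r => g.
pose A := \matrix_(i, j) (inord `|(g i j %% k.+1%:Z)%Z|%N : 'I_k.+1).
exists (map_mx (fun i : 'I_k.+1 => (i : nat)%:Z) A).
  by apply: map_f; rewrite mem_enum.
move=> j; rewrite !mxE inordK.
  rewrite gez0_abs ?modz_ge0 //.
  by rewrite {1}(divz_eq (g 0 j) k.+1) addrK dvdz_mull.
by rewrite -ltz_nat gez0_abs ?modz_ge0 // ltz_pmod.
Qed.

Lemma Z1 (T : int -> Prop) : is_subgroup T ->
  (forall m, (0 < m)%N -> exists t, T t /\ (m%:Z %| 1 - t)%Z) -> T 1.
Proof.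
move=> HT Hm.
have [t0 [T0 D0]] := Hm 2%N isT.
have t0n : t0 != 0 by apply: contraTneq D0 => ->.
have [t [Tt Dt]] := Hm `|t0|%N (eq_ind_r is_true t0n (absz_gt0 t0)).
have /dvdzP [q Eq] : (t0 %| 1 - t)%Z by move: Dt; rewrite !dvdzE.
have -> : 1 = t + t0 *~ q by rewrite mulrzz mulrC -Eq addrC subrK.
by apply: (subgD HT) => //; apply: (subgMz HT).
Qed.

Definition supp d k (v : 'rV[int]_d) := forall j : 'I_d, (k <= j)%N -> v ord0 j = 0.
Definition hypk d (H : 'rV[int]_d -> Prop) k := forall m, (0 < m)%N -> forall v, supp k v ->
  exists e, H e /\ supp k e /\ Gm m (v - e).

Lemma lattice_step d (H : 'rV[int]_d -> Prop) k (kd : (k < d)%N) : is_subgroup H ->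
  hypk H k.+1 -> exists hk, H hk /\ supp k.+1 hk /\ hk ord0 (Ordinal kd) = 1.
Proof.
move=> HH Hk; set ik := Ordinal kd.
pose T z := exists e, H e /\ supp k.+1 e /\ e ord0 ik = z.
suff : T 1 by [].
apply: Z1.
  split; first by exists 0; split; [exact: (subg0 HH) | split => [j _|]; rewrite mxE].
  move=> x y [e1 [H1 [S1 E1]]] [e2 [H2 [S2 E2]]]; exists (e1 - e2); split; first exact: (subgB HH).
  split; last by rewrite !mxE E1 E2.
  by move=> j kj; rewrite !mxE S1 // S2 // subr0.
move=> m m0.
have Sd : supp k.+1 (delta_mx ord0 ik : 'rV[int]_d).
  move=> j kj; rewrite mxE eqxx /=; case: eqP => // E.
  by move: kj; rewrite E /= ltnn.
have [e [He [Se De]]] := Hk m m0 _ Sd.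
exists (e ord0 ik); split; first by exists e.
by have := De ik; rewrite !mxE !eqxx.
Qed.

Lemma supp_sub d k (kd : (k < d)%N) (hk : 'rV[int]_d) v :
  supp k.+1 hk -> hk ord0 (Ordinal kd) = 1 -> supp k.+1 v ->
  supp k (v - hk *~ (v ord0 (Ordinal kd))).
Proof.
move=> Sh Eh Sv j; rewrite leq_eqVlt => /orP [/eqP kj|kj].
  have -> : j = Ordinal kd by apply: val_inj.
  by rewrite !mxE rv_mulz Eh mul1r subrr.
by rewrite !mxE rv_mulz (Sv j) // (Sh j) // mul0r subrr.
Qed.

Lemma hyp_down d (H : 'rV[int]_d -> Prop) k (kd : (k < d)%N) : is_subgroup H ->
  hypk H k.+1 -> hypk H k.
Proof.
move=> HH Hk.
have [hk [Hh [Sh Eh]]] := lattice_step kd HH Hk.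
move=> m m0 v Sv.
have Sv' : supp k.+1 v by move=> j kj; apply: Sv; exact: ltnW.
have [e [He [Se De]]] := Hk m m0 v Sv'.
exists (e - hk *~ (e ord0 (Ordinal kd))); split.
  by apply: (subgB HH) => //; apply: (subgMz HH).
split; first exact: supp_sub.
have Dk : (m%:Z %| e ord0 (Ordinal kd))%Z.
  have := De (Ordinal kd); rewrite !mxE Sv //= sub0r.
  by rewrite rpredN.
move=> j; have := De j; rewrite !mxE rv_mulz => Dj.
by rewrite opprB addrCA addrC rpredD // dvdz_mull.
Qed.

Lemma lattice_ind d (H : 'rV[int]_d -> Prop) : is_subgroup H ->
  forall k, (k <= d)%N -> hypk H k -> forall v, supp k v -> H v.
Proof.
move=> HH; elim => [|k IH] kd Hk v Sv.
  have -> : v = 0 by apply/matrixP => i j; rewrite ord1 mxE; apply: Sv.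
  exact: (subg0 HH).
have [hk [Hh [Sh Eh]]] := lattice_step kd HH Hk.
have Hv' := IH (ltnW kd) (hyp_down kd HH Hk) _ (supp_sub Sh Eh Sv).
have := subgD HH Hv' (subgMz HH (v ord0 (Ordinal kd)) Hh).
by rewrite subrK.
Qed.

Lemma lattice d (H : 'rV[int]_d -> Prop) : is_subgroup H ->
  (forall m, (0 < m)%N -> forall v, exists e, H e /\ Gm m (v - e)) -> forall v, H v.
Proof.
move=> HH Hm v; apply: (lattice_ind HH (leqnn d)) => [m m0 w _|j]; last by rewrite leqNgt ltn_ord.
have [e [He De]] := Hm m m0 w; exists e; split => //; split => // j.
by rewrite leqNgt ltn_ord.
Qed.

Unset Implicit Arguments. Set Strict Implicit.

Theorem mainTheorem5 (S : countType) (C : S -> S -> bool) (d : nat)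
    (h : S -> S -> 'rV[int]_d)
    (Hrow : finite_rows C) (Hcol : finite_cols C)
    (Hne : inhabited (Sigma C)) (Htr : transitive_shift C) :
  (ftp C h <-> (forall g, in_gen (disp C h) g)) /\
  ((forall g, in_gen (disp C h) g) <->
    (forall Gam : 'rV[int]_d -> Prop, is_subgroup Gam -> finite_index Gam ->
       (forall g, sg_quot Gam (disp_quot C h Gam) g <-> gen_quot Gam (disp_quot C h Gam) g) /\
       (forall g, gen_quot Gam (disp_quot C h Gam) g))).
Proof.
have [g0 Hg0] := exists_periodic h Hne Htr.
split; split.
- move=> Hftp; apply: (lattice (in_gen_sub (disp C h))) => m m0 v.
  exact: (cosets_of_trans (Gm_sub d m) Hne (Hftp _ (Gm_sub d m) (Gm_fin d m0)) v).
- by move=> HB; exact: (ftp_of_gen Htr HB).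
- move=> HB Gam HP HF; split.
    move=> g; split.
      by move=> [a [Ha Ga]]; exists a; split => //; exact: sg_gen.
    move=> [a [Ha Ga]].
    have X0 : exists x0, disp_quot C h Gam x0.
      case: Hg0 => p [n [np [pp E]]]; exists g0, p, n; do 2!split => //.
      by rewrite E subrr; exact: (subg0 HP).
    have [s [Ss Es]] := gen_sg HP HF X0 Ha.
    by exists s; split => //; exact: (eqm_trans HP Ga Es).
  move=> g; exists g; split; first exact: (gen_to_quot HP (HB g)).
  by rewrite subrr; exact: (subg0 HP).
- move=> Hc; apply: (lattice (in_gen_sub (disp C h))) => m m0 v.
  have [_ Hg] := Hc _ (Gm_sub d m) (Gm_fin d m0).
  have [a [Ha Ga]] := Hg v.
  have [e [He Ge]] := quot_conv (Gm_sub d m) Ha.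
  by exists e; split => //; exact: (eqm_trans (Gm_sub d m) Ga Ge).
Qed.
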